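(* Let $\mu>0$, $\sigma\ge 0$ and $r=\sigma/\mu$. Then the deterministic robust approximation ratio for selling a single item satisfies \[\mathrm{DAPX}(\mu,\sigma)=\inf_{p\ge 0}\ \sup_{F\in\mathbb{F}_{\mu,\sigma}}\frac{\mathrm{OPT}(F)}{\mathrm{REV}(p;F)}=\rho_D(r),\] where $\rho_D(r)$ is the unique positive solution $\rho$ of $\frac{(\rho-1)^3}{(2\rho-1)^2}=r^2$. Moreover, this value is achieved by the take-it-or-leave-it price $p=\frac{\rho_D(r)}{2\rho_D(r)-1}\cdot\mu$, i.e. $\sup_{F\in\mathbb{F}_{\mu,\sigma}}\mathrm{OPT}(F)/\mathrm{REV}(p;F)=\rho_D(r)$ for this $p$.
   Context: A nonnegative real random variable is $(\mu,\sigma)$-distributed if its expectation is $\mu$ and its standard deviation is at most $\sigma$; $\mathbb{F}_{\mu,\sigma}$ denotes the class of distributions of such random variables. There is one item and one buyer whose value $X$ is drawn from $F$. For a price $p\ge 0$, $\mathrm{REV}(p;F)=p\cdot\Pr[X\ge p]$ is the revenue of posting the take-it-or-leave-it price $p$, and $\mathrm{OPT}(F)=\sup_{p\ge0}\mathrm{REV}(p;F)$ is the optimal revenue over all truthful (possibly randomized) mechanisms. A ratio with zero denominator is interpreted as $+\infty$. *)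

(* Defs.v *)
From HB Require Import structures.
From mathcomp Require Import all_boot all_order all_algebra.
From mathcomp Require Import all_classical all_reals all_analysis.
Set Implicit Arguments. Unset Strict Implicit. Unset Printing Implicit Defensive.
Import Order.TTheory GRing.Theory Num.Theory.
Local Open Scope classical_set_scope.
Local Open Scope ring_scope.
Local Open Scope ereal_scope.

(* F is (mu,sigma)-distributed iff X >= 0 a.s., E[X] = mu and
   the standard deviation sqrt(Var X) is at most sigma (with sigma >= 0 this
   is Var X = E[(X-mu)^2] <= sigma^2). *)
Definition mu_sigma_class (R : realType) (mu sigma : R) : set (probability R R) :=
  [set F : probability R R |
     F [set x : R | (x < 0)%R] = 0 /\
     \int[F]_x (x%:E) = mu%:E /\
     \int[F]_x (((x - mu) ^+ 2)%:E) <= (sigma ^+ 2)%:E].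

Definition REV (R : realType) (p : R) (F : probability R R) : R :=
  (p * fine (F [set x : R | (p <= x)%R]))%R.

Definition OPT (R : realType) (F : probability R R) : \bar R :=
  ereal_sup [set (REV p F)%:E | p in [set p : R | (0 <= p)%R]].

Definition ratio (R : realType) (p : R) (F : probability R R) : \bar R :=
  if REV p F == 0%R then +oo else OPT F * ((REV p F)^-1)%:E.

Definition robust_ratio (R : realType) (mu sigma p : R) : \bar R :=
  ereal_sup [set ratio p F | F in mu_sigma_class mu sigma].

Definition DAPX (R : realType) (mu sigma : R) : \bar R :=
  ereal_inf [set robust_ratio mu sigma p | p in [set p : R | (0 <= p)%R]].

(* rho is a positive solution of (rho-1)^3/(2rho-1)^2 = r^2
   (the left-hand side being defined, i.e. 2rho-1 <> 0) *)
Definition rhoD_eq (R : realType) (r rho : R) : Prop :=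
  (0 < rho)%R /\ (2 * rho - 1 != 0)%R /\
  ((rho - 1) ^+ 3 / (2 * rho - 1) ^+ 2 = r ^+ 2)%R.

(* Main.v *)
Require Import Defs.
From HB Require Import structures.
From mathcomp Require Import all_boot all_order all_algebra.
From mathcomp Require Import all_classical all_reals all_analysis.
From mathcomp Require Import measurable_realfun.
From mathcomp Require Import ring lra.
Import Order.TTheory GRing.Theory Num.Theory.
Import numFieldTopology.Exports numFieldNormedType.Exports.
Set Implicit Arguments. Unset Strict Implicit.
Local Open Scope classical_set_scope.
Local Open Scope ring_scope.


Section rho.
Variable R : realType.

Lemma g_mono {x y : R} : 1 <= x -> x < y ->
  (x - 1) ^+ 3 * (2 * y - 1) ^+ 2 < (y - 1) ^+ 3 * (2 * x - 1) ^+ 2.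
Proof.
move=> x1 xy.
set a := x - 1; set b := y - 1.
have a0 : 0 <= a by rewrite /a subr_ge0.
have ab : a < b by rewrite /a /b ltrBlDr subrK.
have -> : 2 * y - 1 = 2 * b + 1 by rewrite /b; ring.
have -> : 2 * x - 1 = 2 * a + 1 by rewrite /a; ring.
have h1 : a * (2 * b + 1) <= b * (2 * a + 1) by nra.
have h2 : (a * (2 * b + 1)) ^+ 2 <= (b * (2 * a + 1)) ^+ 2.
  rewrite ler_sqr ?nnegrE //; nra.
have b0 : 0 < b by lra.
have h3 : a * (a * (2 * b + 1)) ^+ 2 <= a * (b * (2 * a + 1)) ^+ 2 by rewrite ler_wpM2l.
have h4 : a * (b * (2 * a + 1)) ^+ 2 < b * (b * (2 * a + 1)) ^+ 2.
  rewrite ltr_pM2r //; apply: exprn_gt0; apply: mulr_gt0 => //; lra.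
have e1 : a ^+ 3 * (2 * b + 1) ^+ 2 = a * (a * (2 * b + 1)) ^+ 2 by ring.
have e2 : b ^+ 3 * (2 * a + 1) ^+ 2 = b * (b * (2 * a + 1)) ^+ 2 by ring.
rewrite e1 e2; exact: le_lt_trans h3 h4.
Qed.

Lemma rho_exists (r : R) : exists2 x : R, 1 <= x & (x - 1) ^+ 3 = r ^+ 2 * (2 * x - 1) ^+ 2.
Proof.
set r2 := r ^+ 2.
have r20 : 0 <= r2 by rewrite /r2 sqr_ge0.
pose f := fun x : R => (x - 1) ^+ 3 - r2 * (2 * x - 1) ^+ 2.
have M1 : 1 <= 2 + 9 * r2 by lra.
have cf : continuous f.
  have e : f = fun x => (x - 1) * (x - 1) * (x - 1) - r2 * ((2 * x - 1) * (2 * x - 1)).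
    by apply/funext => y; rewrite /f; ring.
  rewrite e => x.
  have c1 : (fun y : R => y - 1) @ x --> (x - 1) by apply: cvgB; [exact: cvg_id| exact: cvg_cst].
  have c2 : (fun y : R => 2 * y - 1) @ x --> (2 * x - 1).
    by apply: cvgB; [apply: cvgM; [exact: cvg_cst|exact: cvg_id]| exact: cvg_cst].
  apply: cvgB; first by apply: cvgM => //; apply: cvgM.
  by apply: cvgM; [exact: cvg_cst| apply: cvgM].
have f1 : f 1 <= 0 by rewrite /f; nra.
have fM : 0 <= f (2 + 9 * r2).
  rewrite /f.
  have -> : 2 + 9 * r2 - 1 = 1 + 9 * r2 by ring.
  have -> : 2 * (2 + 9 * r2) - 1 = 3 + 18 * r2 by ring.
  rewrite subr_ge0; nra.
have [c cI fc] : exists2 c, c \in `[1, 2 + 9 * r2] & f c = 0.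
  apply: IVT => //; first exact: continuous_subspaceT.
  by rewrite ge_min f1 /= le_max fM orbT.
exists c.
  by move: cI; rewrite in_itv /= => /andP[].
by apply/eqP; rewrite -subr_eq0; apply/eqP.
Qed.


Lemma rhoD_iff (r x : R) :
  rhoD_eq r x <-> 1 <= x /\ (x - 1) ^+ 3 = r ^+ 2 * (2 * x - 1) ^+ 2.
Proof.
split.
  move=> [x0 [D0 e]].
  have D20 : (2 * x - 1) ^+ 2 != 0 by rewrite expf_neq0.
  have e' : (x - 1) ^+ 3 = r ^+ 2 * (2 * x - 1) ^+ 2.
    by rewrite -e divfK.
  split => //.
  rewrite leNgt; apply/negP => x1.
  have : (x - 1) ^+ 3 < 0.
    have -> : (x - 1) ^+ 3 = - ((1 - x) ^+ 3) by ring.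
    rewrite oppr_lt0; apply: exprn_gt0; lra.
  rewrite e'; apply/negP; rewrite -leNgt; apply: mulr_ge0; exact: sqr_ge0.
move=> [x1 e]; split; first lra.
have D0 : 2 * x - 1 != 0 by apply/negP => /eqP; lra.
split => //.
rewrite e mulfK // expf_neq0 //.
Qed.

Lemma rho_unique (r x y : R) : rhoD_eq r x -> rhoD_eq r y -> x = y.
Proof.
move=> /rhoD_iff [x1 ex] /rhoD_iff [y1 ey].
have key : forall u v : R, 1 <= u -> u < v ->
    (u - 1) ^+ 3 = r ^+ 2 * (2 * u - 1) ^+ 2 ->
    (v - 1) ^+ 3 = r ^+ 2 * (2 * v - 1) ^+ 2 -> False.
  move=> u v u1 uv eu ev.
  have := g_mono u1 uv; rewrite eu ev.
  have -> : r ^+ 2 * (2 * u - 1) ^+ 2 * (2 * v - 1) ^+ 2 =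
            r ^+ 2 * (2 * v - 1) ^+ 2 * (2 * u - 1) ^+ 2 by ring.
  by rewrite ltxx.
case: (ltgtP x y) => // [xy|yx].
  by case: (key x y).
by case: (key y x).
Qed.

End rho.


Section classB.
Variables (R : realType) (mu sigma : R) (F : probability R R).
Hypothesis hF : mu_sigma_class mu sigma F.

Let mV : measurable_fun setT (fun x : R => ((x - mu) ^+ 2)%:E).
Proof. by apply/measurable_EFinP; apply: measurable_funX; apply: measurable_funB. Qed.

Let iV : F.-integrable setT (fun x : R => ((x - mu) ^+ 2)%:E).
Proof.
apply/integrableP; split => //.
under eq_integral => x _ do rewrite gee0_abs ?lee_fin ?sqr_ge0 //.
case: hF => _ [_ hv].
exact: le_lt_trans hv (ltry _).
Qed.

Let iX : F.-integrable setT (fun x : R => x%:E).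
Proof.
have ic := finite_measure_integrable_cst F (1 + `|mu|) measurableT.
apply: (le_integrable measurableT _ _ (integrableD measurableT iV ic)).
  exact/measurable_EFinP.
move=> x _ /=.
rewrite lee_fin.
rewrite [X in _ <= X]ger0_norm; last by rewrite addr_ge0 ?sqr_ge0 // addr_ge0.
have [h|h] := lerP 1 `|x - mu|.
  have : `|x - mu| <= (x - mu) ^+ 2.
    rewrite -real_normK ?num_real //; nra.
  have := ler_normD (x - mu) mu; rewrite subrK.
  move=> h1 h2.
  have : 0 <= `|mu| := normr_ge0 mu.
  lra.
have := ler_normD (x - mu) mu; rewrite subrK.
have := sqr_ge0 (x - mu).
have : 0 <= `|mu| := normr_ge0 mu.
lra.
Qed.

Lemma quad (v : R) :
  (\int[F]_x (((x - mu + v) ^+ 2)%:E) <= (sigma ^+ 2 + v ^+ 2)%:E)%E.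
Proof.
have -> : (fun x : R => ((x - mu + v) ^+ 2)%:E) =
  (fun x => ((x - mu) ^+ 2)%:E + ((2 * v)%R%:E * x%:E + (EFin \o cst (v ^+ 2 - 2 * v * mu)%R) x))%E.
  by apply/funext => x /=; rewrite -EFinM -!EFinD; congr EFin; ring.
have ic := finite_measure_integrable_cst F (v ^+ 2 - 2 * v * mu) measurableT.
rewrite integralD //; last first.
  by apply: integrableD => //; apply: integrableZl.
rewrite integralD //; last by apply: integrableZl.
rewrite integralZl //.
case: hF => _ [hm hv].
rewrite hm.
have -> : (\int[F]_x (EFin \o cst (v ^+ 2 - 2 * v * mu)%R) x = (v ^+ 2 - 2 * v * mu)%:E)%E.
  have -> : (EFin \o cst (v ^+ 2 - 2 * v * mu)%R) = cst (v ^+ 2 - 2 * v * mu)%:E by [].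
  rewrite integral_cst //.
  by have /= -> := probability_setT F; rewrite mule1.
rewrite -EFinM -EFinD.
have -> : (2 * v * mu + (v ^+ 2 - 2 * v * mu)) = v ^+ 2 by ring.
rewrite EFinD; exact: leeD.
Qed.

Lemma tail (A : set R) (v w : R) : measurable A -> 0 < w ->
  (forall x, A x -> w ^+ 2 <= (x - mu + v) ^+ 2) ->
  (F A <= ((sigma ^+ 2 + v ^+ 2) / w ^+ 2)%:E)%E.
Proof.
move=> mA w0 hA.
have w20 : 0 < w ^+ 2 by rewrite exprn_gt0.
rewrite -[A]setIT -integral_indic //.
apply: (@le_trans _ _ (\int[F]_x ((w ^+ 2)^-1%:E * ((x - mu + v) ^+ 2)%:E))%E).
  apply: ge0_le_integral => //.
  - by apply/measurable_EFinP; exact: measurable_indic.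
  - apply: emeasurable_funM => //.
    by apply/measurable_EFinP; apply: measurable_funX; apply: measurable_funD => //; apply: measurable_funB.
  move=> x _; rewrite -EFinM lee_fin indicE.
  case: (boolP (x \in A)) => [/set_mem xA|_] /=; last first.
    by rewrite mulr_ge0 ?sqr_ge0 // invr_ge0 ltW.
  by rewrite ler_pdivlMl // mulr1; apply: hA.
rewrite ge0_integralZl_EFin //; last 3 first.
- by move=> x _; rewrite lee_fin sqr_ge0.
- by apply/measurable_EFinP; apply: measurable_funX; apply: measurable_funD => //; apply: measurable_funB.
- by rewrite invr_ge0 ltW.
rewrite mulrC EFinM lee_pmul2l ?lte_fin ?invr_gt0 //.
exact: quad.
Qed.

End classB.


Section sets.
Variable R : realType.

Lemma m_lt (a : R) : measurable [set x : R | x < a].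
Proof.
have -> : [set x : R | x < a] = [set` Interval -oo%O (BLeft a)].
  by apply/seteqP; split => x /=; rewrite in_itv.
exact: measurable_itv.
Qed.

Lemma m_ge (a : R) : measurable [set x : R | a <= x].
Proof.
have -> : [set x : R | a <= x] = [set` Interval (BLeft a) +oo%O].
  by apply/seteqP; split => x /=; rewrite in_itv /= andbT.
exact: measurable_itv.
Qed.

Variable F : probability R R.

Lemma PfinE {A : set R} : measurable A -> F A = (fine (F A))%:E.
Proof. by move=> mA; rewrite fineK // fin_num_measure. Qed.

Lemma Pfine_ge0 (A : set R) : 0 <= fine (F A).
Proof. exact: fine_ge0. Qed.

Lemma Pfine_le1 (A : set R) : measurable A -> fine (F A) <= 1.
Proof. by move=> mA; rewrite -lee_fin -PfinE //; exact: probability_le1. Qed.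

Lemma Pge_lt (a : R) :
  fine (F [set x | a <= x]) = 1 - fine (F [set x | x < a]).
Proof.
have -> : [set x : R | a <= x] = ~` [set x | x < a].
  by apply/seteqP; split => x /=; rewrite leNgt => /negP.
rewrite probability_setC; last exact: m_lt.
by rewrite (PfinE (m_lt a)) -EFinB.
Qed.

Lemma Pmono (a b : R) : a <= b ->
  fine (F [set x | b <= x]) <= fine (F [set x | a <= x]).
Proof.
move=> ab; rewrite -lee_fin -!PfinE; try exact: m_ge.
apply: le_measure; try by rewrite inE; exact: m_ge.
by move=> x /=; apply: le_trans.
Qed.

End sets.

Lemma sig0_lt (R : realType) (mu : R) (F : probability R R) :
  mu_sigma_class mu 0 F -> F [set x | x < mu] = 0%E.
Proof.
move=> [_ [_ hv]].
have mV : measurable_fun setT (fun x : R => ((x - mu) ^+ 2)%:E).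
  by apply/measurable_EFinP; apply: measurable_funX; apply: measurable_funB.
have h0 : (\int[F]_x `|((x - mu) ^+ 2)%:E| = 0)%E.
  under eq_integral => x _ do rewrite gee0_abs ?lee_fin ?sqr_ge0 //.
  apply/eqP; rewrite eq_le; apply/andP; split.
    by move: hv; rewrite expr0n.
  by apply: integral_ge0 => x _; rewrite lee_fin sqr_ge0.
have := (ae_eq_integral_abs F measurableT mV).1 h0.
case=> N [mN N0 HN].
apply: (subset_measure0 _ _ _ N0) => //; first exact: m_lt.
move=> x /= xmu; apply: HN => /= H.
have := H I; move/eqP; rewrite eqe sqrf_eq0 subr_eq0 => /eqP xe.
by move: xmu; rewrite xe ltxx.
Qed.


Section mix.
Variables (R : realType) (a b t0 : R).

Definition mw : R := Num.min (Num.max t0 0) 1.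

Lemma mw_ge0 : 0 <= mw.
Proof. by rewrite /mw le_min ler01 le_max lexx orbT. Qed.

Lemma mw_le1 : mw <= 1.
Proof. by rewrite /mw ge_min lexx orbT. Qed.

Lemma mw1_ge0 : 0 <= 1 - mw.
Proof. by rewrite subr_ge0 mw_le1. Qed.

Definition mixm (A : set R) : \bar R :=
  (mw%:E * \d_b A + (1 - mw)%:E * \d_a A)%E.

Let mixm_add : mixm = measure_add (mscale (NngNum mw_ge0) \d_b) (mscale (NngNum mw1_ge0) \d_a).
Proof. by apply/funext => A; rewrite measure_addE. Qed.

Let mixm0 : mixm set0 = 0%E.
Proof. by rewrite /mixm !diracE !in_set0 !mule0 adde0. Qed.

Let mixm_ge0 A : (0 <= mixm A)%E.
Proof. by rewrite /mixm !diracE adde_ge0 // mule_ge0 // lee_fin ?mw_ge0 ?mw1_ge0. Qed.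

Let mixm_sa : semi_sigma_additive mixm.
Proof. rewrite mixm_add; exact: measure_semi_sigma_additive. Qed.

HB.instance Definition _ := isMeasure.Build _ _ _ mixm mixm0 mixm_ge0 mixm_sa.

Let mixm_setT : mixm setT = 1%E.
Proof.
rewrite /mixm !diracT !mule1 -EFinD; congr EFin; ring.
Qed.

HB.instance Definition _ := Measure_isProbability.Build _ _ _ mixm mixm_setT.

Lemma mixmE A : mixm A = (mw * (b \in A)%:R + (1 - mw) * (a \in A)%:R)%:E.
Proof. by rewrite /mixm !diracE -!EFinM -EFinD. Qed.

Lemma mix_int_ge0 (f : R -> \bar R) : measurable_fun setT f -> (forall x, 0 <= f x)%E ->
  (\int[mixm]_x f x = mw%:E * f b + (1 - mw)%:E * f a)%E.
Proof.
move=> mf f0.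
rewrite mixm_add ge0_integral_measure_add //.
rewrite !ge0_integral_mscale // !integral_dirac //.
by rewrite !diracT !mul1e.
Qed.

Lemma mix_int (g : R -> R) : measurable_fun setT g ->
  (\int[mixm]_x (g x)%:E = (mw * g b + (1 - mw) * g a)%:E)%E.
Proof.
move=> mg.
rewrite integralE.
rewrite !mix_int_ge0 //.
rewrite !funeposE !funenegE.
have hm : forall y : R, (maxe (y%:E) 0%R = (Num.max y 0)%:E)%E.
  by move=> y; rewrite -EFin_max.
have hn : forall y : R, (maxe (- y%:E) 0%R = (Num.max (- y) 0)%:E)%E.
  by move=> y; rewrite -EFinN -EFin_max.
rewrite -!EFinN !hm -!EFinM -!EFinD.
congr EFin.
have hx : forall y : R, Num.max y 0 - Num.max (- y) 0 = y.
  move=> y; case: (lerP 0 y) => hy.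
    have -> : Num.max (- y) 0 = 0 by apply/max_idPr; rewrite oppr_le0.
    by rewrite subr0.
  have -> : Num.max (- y) 0 = - y by apply/max_idPl; rewrite oppr_ge0 ltW.
  by rewrite sub0r opprK.
rewrite -[in RHS](hx (g b)) -[in RHS](hx (g a)).
  ring.
- by apply: measurable_funeneg; exact/measurable_EFinP.
- by apply: measurable_funepos; exact/measurable_EFinP.
Qed.

End mix.


Lemma upper (R : realType) (mu sigma rho : R) : 0 < mu -> 0 <= sigma ->
  rhoD_eq (sigma / mu) rho ->
  (robust_ratio mu sigma (rho / (2 * rho - 1) * mu) <= rho%:E)%E.
Proof.
move=> mu0 s0 /rhoD_iff [r1 e].
set D := 2 * rho - 1.
have D1 : 1 <= D by rewrite /D; lra.
have Dn0 : D != 0 by apply/negP => /eqP; lra.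
have mun0 : mu != 0 by apply/negP => /eqP; lra.
have rho0 : 0 < rho by lra.
set p := rho / D * mu.
have p0 : 0 < p by rewrite /p; apply: mulr_gt0 => //; apply: divr_gt0 => //; lra.
have es : sigma ^+ 2 * rho ^+ 2 = (rho - 1) ^+ 3 * p ^+ 2.
  by rewrite e /p -/D; field; apply/andP.
have emu : mu * rho = p * D by rewrite /p; field.
move: @p p0 es emu => p p0 es emu.
apply: ge_ereal_sup => _ [F hF <-].
rewrite /ratio.
set t := fine (F [set x | p <= x]).
have t1 : 1 <= rho * t.
  case: (eqVneq sigma 0) => [s00|sn0].
    have r11 : rho = 1.
      have h : (rho - 1) ^+ 3 * p ^+ 2 = 0 by rewrite -es s00 expr0n mul0r.
      move/eqP: h; rewrite mulf_eq0 !expf_eq0 /= => /orP[/eqP|/eqP]; lra.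
    have pmu : p = mu by move: emu; rewrite /D r11; lra.
    rewrite /t Pge_lt pmu r11 mul1r.
    move: hF; rewrite s00 => hF.
    by rewrite (sig0_lt hF) /= subr0.
  have sp : 0 < sigma by rewrite lt_neqAle eq_sym sn0.
  have r1' : 1 < rho.
    rewrite lt_neqAle r1 andbT; apply/negP => /eqP r11.
    have h : sigma ^+ 2 * rho ^+ 2 = 0 by rewrite es -r11 subrr expr0n mul0r.
    move/eqP: h; rewrite mulf_eq0 !expf_eq0 /= (negbTE sn0) /= => /eqP; lra.
  set k := mu - p.
  have ek : k * rho = p * (rho - 1) by rewrite /k /D in emu *; lra.
  have k0 : 0 < k.
    have : 0 < k * rho by rewrite ek; apply: mulr_gt0 => //; lra.
    by rewrite pmulr_lgt0.
  set u := sigma ^+ 2 / k.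
  have u0 : 0 <= u by rewrite /u; apply: divr_ge0; [exact: sqr_ge0|lra].
  have := @tail _ _ _ _ hF _ (-u) (k + u) (m_lt p) (ltr_wpDr u0 k0).
  have H : forall x : R, [set x | x < p] x -> (k + u) ^+ 2 <= (x - mu + - u) ^+ 2.
    move=> x /= xp.
    have h : x - mu + - u <= - (k + u) by rewrite /k; lra.
    have h2 : 0 <= k + u by lra.
    nra.
  move=> /(_ H) {H}.
  rewrite (PfinE F (m_lt p)) lee_fin.
  have -> : (sigma ^+ 2 + (- u) ^+ 2) / (k + u) ^+ 2 = (rho - 1) / rho.
    have ss : sigma ^+ 2 = (rho - 1) * k ^+ 2.
      apply: (mulIf (lt0r_neq0 (exprn_gt0 2 rho0))).
      rewrite es; have -> : (rho - 1) * k ^+ 2 * rho ^+ 2 = (rho - 1) * (k * rho) ^+ 2 by ring.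
      rewrite ek; ring.
    rewrite /u ss; field.
    apply/and3P; split; apply/negP => /eqP h; try lra.
    have : 0 < k + (rho - 1) * k by nra.
    by rewrite h ltxx.
  rewrite /t Pge_lt => hle.
  have : rho * (1 - fine (F [set x | x < p])) >= rho * (1 - (rho - 1) / rho).
    by rewrite ler_pM2l //; lra.
  have -> : rho * (1 - (rho - 1) / rho) = 1 by field; apply/negP => /eqP; lra.
  done.
have tpos : 0 < t.
  have : 0 < rho * t by lra.
  by rewrite pmulr_rgt0.
have Rp : REV p F = p * t by [].
unfold Defs.ratio; rewrite Rp ifF; last by apply/negbTE; apply: lt0r_neq0; exact: mulr_gt0.
have OPTle : (OPT F <= (rho * p * t)%:E)%E.
  apply: ge_ereal_sup => _ [q q0 <-].
  rewrite lee_fin /REV.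
  set tq := fine (F [set x | q <= x]).
  have tq0 : 0 <= tq by exact: Pfine_ge0.
  have tq1 : tq <= 1 by apply: Pfine_le1; exact: m_ge.
  have q0' : 0 <= q by [].
  case: (lerP q p) => qp.
    have : q * tq <= q by rewrite ler_piMr.
    have : p <= rho * p * t.
      have -> : rho * p * t = p * (rho * t) by ring.
      by rewrite ler_peMr // ltW.
    lra.
  case: (lerP q (rho * p)) => qrp.
    have h1 : tq <= t by apply: Pmono; exact: ltW.
    have : q * tq <= rho * p * tq by rewrite ler_wpM2r.
    have : rho * p * tq <= rho * p * t by apply: ler_wpM2l => //; apply: mulr_ge0; lra.
    lra.
  set c := q - mu.
  have c0 : 0 < c.
    have : mu <= rho * p.
      have : mu * rho <= rho * p * rho.
        rewrite emu /D; have := mulr_ge0 (ltW p0) (sqr_ge0 (rho - 1)); nra.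
      by rewrite ler_pM2r.
    rewrite /c; lra.
  set u := sigma ^+ 2 / c.
  have u0 : 0 <= u by rewrite /u; apply: divr_ge0; [exact: sqr_ge0|lra].
  have := @tail _ _ _ _ hF _ u (c + u) (m_ge q) (ltr_wpDr u0 c0).
  have H : forall x : R, [set x | q <= x] x -> (c + u) ^+ 2 <= (x - mu + u) ^+ 2.
    move=> x /= xq.
    have h : c + u <= x - mu + u by rewrite /c; lra.
    have h2 : 0 <= c + u by lra.
    nra.
  move=> /(_ H) {H}.
  rewrite (PfinE F (m_ge q)) lee_fin -/tq.
  have -> : (sigma ^+ 2 + u ^+ 2) / (c + u) ^+ 2 = sigma ^+ 2 / (sigma ^+ 2 + c ^+ 2).
    rewrite /u; field.
    apply/andP; split; apply/negP => /eqP h; last lra.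
    have : 0 < c ^+ 2 + sigma ^+ 2 by apply: ltr_pwDl; [exact: exprn_gt0|exact: sqr_ge0].
    by rewrite addrC h ltxx.
  move=> htq.
  have sc0 : 0 < sigma ^+ 2 + c ^+ 2 by apply: ltr_wpDl; [exact: sqr_ge0|exact: exprn_gt0].
  have key : rho ^+ 2 * (p * (sigma ^+ 2 + c ^+ 2) - q * sigma ^+ 2) =
     rho ^+ 2 * p * (q - rho * p) ^+ 2 + (q - rho * p) * p ^+ 2 * (rho - 1) ^+ 2 * (rho + 1).
    have hc : rho * c = rho * q - p * D by rewrite /c -emu; ring.
    have -> : rho ^+ 2 * (p * (sigma ^+ 2 + c ^+ 2) - q * sigma ^+ 2) =
       p * (sigma ^+ 2 * rho ^+ 2) + p * (rho * c) ^+ 2 - q * (sigma ^+ 2 * rho ^+ 2) by ring.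
    rewrite es hc /D; ring.
  have kpos : 0 <= p * (sigma ^+ 2 + c ^+ 2) - q * sigma ^+ 2.
    have : 0 <= rho ^+ 2 * (p * (sigma ^+ 2 + c ^+ 2) - q * sigma ^+ 2).
      rewrite key; apply: addr_ge0.
        by apply: mulr_ge0; [apply: mulr_ge0; [exact: sqr_ge0|exact: ltW]|exact: sqr_ge0].
      apply: mulr_ge0; last lra.
      apply: mulr_ge0; last exact: sqr_ge0.
      by apply: mulr_ge0; [lra|exact: sqr_ge0].
    by rewrite pmulr_rge0 // exprn_gt0.
  have h1 : q * tq <= q * (sigma ^+ 2 / (sigma ^+ 2 + c ^+ 2)) by rewrite ler_wpM2l.
  have h2 : q * (sigma ^+ 2 / (sigma ^+ 2 + c ^+ 2)) <= p.
    by rewrite mulrA ler_pdivrMr //; lra.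
  have : p <= rho * p * t.
    have -> : rho * p * t = p * (rho * t) by ring.
    by rewrite ler_peMr // ltW.
  lra.
apply: le_trans (lee_wpmul2r _ OPTle) _.
  by rewrite lee_fin invr_ge0 mulr_ge0 // ltW.
rewrite -EFinM lee_fin.
have -> : rho * p * t * (p * t)^-1 = rho by field; apply/andP; split; apply/negP => /eqP h; lra.
done.
Qed.


Lemma mw_id (R : realType) (t : R) : 0 <= t <= 1 -> mw t = t.
Proof.
move=> /andP[t0 t1]; rewrite /mw.
have -> : Num.max t 0 = t by apply/max_idPl.
by apply/min_idPl.
Qed.

Lemma mix_class (R : realType) (mu sigma x0 b t : R) :
  0 <= t <= 1 -> 0 <= x0 -> 0 <= b ->
  t * b + (1 - t) * x0 = mu ->
  t * (b - mu) ^+ 2 + (1 - t) * (x0 - mu) ^+ 2 <= sigma ^+ 2 ->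
  mu_sigma_class mu sigma (mixm x0 b t).
Proof.
move=> t01 x00 b0 hm hv.
split; [|split].
- rewrite /= mixmE mw_id //.
  have -> : (b \in [set x : R | x < 0]) = false.
    by apply/negbTE/negP => /set_mem /=; lra.
  have -> : (x0 \in [set x : R | x < 0]) = false.
    by apply/negbTE/negP => /set_mem /=; lra.
  by rewrite !mulr0 addr0.
- rewrite (mix_int _ _ _ (g := id)) //= mw_id //.
  by rewrite hm.
- rewrite (mix_int _ _ _ (g := fun x => (x - mu) ^+ 2)).
    by rewrite mw_id // lee_fin.
  by apply: measurable_funX; apply: measurable_funB.
Qed.

Lemma REV_mix (R : realType) (p x0 b t : R) : 0 <= t <= 1 ->
  REV p (mixm x0 b t) = p * (t * (p <= b)%R%:R + (1 - t) * (p <= x0)%R%:R).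
Proof.
move=> t01; rewrite /REV -[X in fine X]/(mixm x0 b t [set x | p <= x]) mixmE mw_id //=.
have inS : forall u v : R, (v \in [set x : R | u <= x]) = (u <= v).
  by move=> u v; apply/idP/idP => [/set_mem //|h]; exact: mem_set.
by rewrite !inS.
Qed.

Lemma alg_mix (R : realType) (mu : R) {s c : R} : 0 < c -> 0 < s + c ^+ 2 ->
  c ^+ 2 / (s + c ^+ 2) * (mu + s / c) + (1 - c ^+ 2 / (s + c ^+ 2)) * (mu - c) = mu /\
  c ^+ 2 / (s + c ^+ 2) * (mu + s / c - mu) ^+ 2 + (1 - c ^+ 2 / (s + c ^+ 2)) * (mu - c - mu) ^+ 2 = s.
Proof.
move=> c0 sc0.
have cn : c != 0 by apply/negP => /eqP; lra.
have scn : s + c ^+ 2 != 0 by apply/negP => /eqP; lra.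
split; field; by apply/andP.
Qed.

Lemma le_sup_approx (R : realType) (r : R) (s : \bar R) :
  (forall y, y < r -> (y%:E <= s)%E) -> (r%:E <= s)%E.
Proof.
case: s => [z| |] H.
- rewrite lee_fin leNgt; apply/negP => zr.
  have := H ((z + r) / 2) ltac:(lra).
  rewrite lee_fin; lra.
- by rewrite leey.
- have := H (r - 1) ltac:(lra).
  by rewrite leeNy_eq.
Qed.

Lemma lower (R : realType) (mu sigma rho p : R) : 0 < mu -> 0 <= sigma ->
  rhoD_eq (sigma / mu) rho -> 0 <= p ->
  (rho%:E <= robust_ratio mu sigma p)%E.
Proof.
move=> mu0 s0 /rhoD_iff [r1 e] p0.
have t01 : 0 <= (1:R) <= 1 by rewrite ler01 lexx.
have F0c : mu_sigma_class mu sigma (mixm mu mu 1).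
  apply: mix_class => //; try lra.
  by rewrite subrr expr0n /= !mulr0 addr0 sqr_ge0.
have [p00|pn0] := eqVneq p 0.
  apply: le_ereal_sup_tmp; exists +oo%E; last exact: leey.
  exists (mixm mu mu 1) => //.
  by rewrite /Defs.ratio REV_mix // p00 mul0r eqxx.
have pp : 0 < p by rewrite lt_neqAle eq_sym pn0.
case: (ltrP mu p) => [mup|pmu].
  apply: le_ereal_sup_tmp; exists +oo%E; last exact: leey.
  exists (mixm mu mu 1) => //.
  by rewrite /Defs.ratio REV_mix // leNgt mup /= !mulr0 addr0 mulr0 eqxx.
set D := 2 * rho - 1.
have D1 : 1 <= D by rewrite /D; lra.
have Dn0 : D != 0 by apply/negP => /eqP; lra.
have mun0 : mu != 0 by apply/negP => /eqP; lra.
set K := mu * (rho - 1) / D.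
have K0 : 0 <= K by rewrite /K; apply: divr_ge0; [apply: mulr_ge0; lra|lra].
have eKD : K * D = (rho - 1) * mu by rewrite /K; field.
have es : sigma ^+ 2 = (rho - 1) * K ^+ 2.
  have e' : (sigma / mu) ^+ 2 = (rho - 1) ^+ 3 / D ^+ 2.
    rewrite e -/D mulfK //; exact: expf_neq0.
  have : sigma ^+ 2 = (sigma / mu) ^+ 2 * mu ^+ 2 by field.
  move=> ->; rewrite e' /K; field.
  exact: Dn0.
move: @K K0 eKD es => K K0 eKD es.
apply: le_sup_approx => y yr.
set m := Num.max 0 (y * p / rho).
have rho0 : 0 < rho by lra.
have m0 : 0 <= m by rewrite /m le_max lexx.
have mp : m < p.
  rewrite /m gt_max pp /= ltr_pdivrMr //.
  nra.
set x0 := (p + m) / 2.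
have x0p : x0 < p by rewrite /x0; lra.
have x00 : 0 < x0 by rewrite /x0; lra.
have x0m : y * p / rho < x0.
  have : y * p / rho <= m by rewrite /m le_max lexx orbT.
  rewrite /x0; lra.
set c := mu - x0.
have c0 : 0 < c by rewrite /c; lra.
set sc := sigma ^+ 2 + c ^+ 2.
have sc0 : 0 < sc by rewrite /sc ltr_wpDl ?sqr_ge0 // exprn_gt0.
set t := c ^+ 2 / sc.
have t0 : 0 < t by rewrite /t divr_gt0 // exprn_gt0.
have t1 : t <= 1 by rewrite /t ler_pdivrMr // mul1r /sc lerDr sqr_ge0.
have t01' : 0 <= t <= 1 by rewrite ltW.
set b := mu + sigma ^+ 2 / c.
have bmu : mu <= b by rewrite /b lerDl divr_ge0 // ?sqr_ge0 // ltW.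
have Fc : mu_sigma_class mu sigma (mixm x0 b t).
  apply: mix_class => //; try lra.
    have [h1 _] := alg_mix mu c0 sc0.
    by rewrite -h1 /t /b /c; congr (_ + _); congr (_ * _); ring.
  - have [_ h2] := alg_mix mu c0 sc0.
    by rewrite -h2 /t /b /c le_eqVlt; apply/orP; left; apply/eqP; congr (_ + _); congr (_ * _); congr (_ ^+ 2); ring.
apply: le_ereal_sup_tmp.
exists (Defs.ratio p (mixm x0 b t)); first by exists (mixm x0 b t).
have Rp : REV p (mixm x0 b t) = p * t.
  rewrite REV_mix //.
  have -> : (p <= b) = true by apply/idP; lra.
  have -> : (p <= x0) = false by apply/negbTE; rewrite -ltNge.
  by rewrite mulr1 mulr0 addr0.
have Rx : REV x0 (mixm x0 b t) = x0.
  rewrite REV_mix //.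
  have -> : (x0 <= b) = true by apply/idP; lra.
  rewrite lexx !mulr1; have -> : t + (1 - t) = 1 by ring.
  by rewrite mulr1.
have Rb : REV b (mixm x0 b t) = b * t.
  rewrite REV_mix //.
  have -> : (b <= x0) = false by apply/negbTE; rewrite -ltNge; lra.
  by rewrite lexx mulr1 mulr0 addr0.
have pt0 : 0 < p * t by apply: mulr_gt0.
rewrite /Defs.ratio Rp ifF; last by apply/negbTE; apply: lt0r_neq0.
have key : forall q, 0 <= q -> (y * (p * t) <= REV q (mixm x0 b t)) ->
    (y%:E <= OPT (mixm x0 b t) * ((p * t)^-1)%:E)%E.
  move=> q q0 hq.
  apply: (@le_trans _ _ ((REV q (mixm x0 b t))%:E * ((p * t)^-1)%:E)%E).
    rewrite -EFinM lee_fin ler_pdivlMr //.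
  apply: lee_wpmul2r; first by rewrite lee_fin invr_ge0 ltW.
  by apply: ereal_sup_ubound; exists q.
have yx : y * p < rho * x0.
  by move: x0m; rewrite ltr_pdivrMr // => h; nra.
case: (lerP c K) => cK.
  apply: (key x0); first exact: ltW.
  rewrite Rx.
  have h : rho * c ^+ 2 <= sc.
    rewrite /sc es.
    have : c ^+ 2 <= K ^+ 2 by rewrite ler_sqr ?nnegrE // ltW.
    have : 0 <= rho - 1 by lra.
    nra.
  have : y * (p * t) <= rho * x0 * t.
    have -> : y * (p * t) = y * p * t by ring.
    by rewrite ler_wpM2r // ?ltW.
  have : rho * t <= 1 by rewrite /t mulrA ler_pdivrMr // mul1r.
  have : 0 <= x0 by lra.
  nra.
apply: (key b); first lra.
rewrite Rb.
have h : rho * x0 <= b.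
  have hk : rho * c ^+ 2 - (rho - 1) * mu * c + sigma ^+ 2 = (c - K) * (rho * c - (rho - 1) * K).
    rewrite es -eKD /D; ring.
  have : 0 <= (c - K) * (rho * c - (rho - 1) * K).
    apply: mulr_ge0; first lra.
    nra.
  rewrite -hk => hh.
  have : rho * x0 * c <= b * c.
    rewrite /b mulrDl divfK; last by apply/negP => /eqP; lra.
    have ex0 : x0 = mu - c by rewrite /c; ring.
    rewrite ex0; nra.
  by rewrite ler_pM2r.
have : y * (p * t) <= rho * x0 * t.
  have -> : y * (p * t) = y * p * t by ring.
  by rewrite ler_wpM2r // ?ltW.
have : rho * x0 * t <= b * t by rewrite ler_wpM2r // ltW.
lra.
Qed.

Unset Implicit Arguments.
Local Close Scope classical_set_scope.

Theorem theorem1 (R : realType) (mu sigma : R) :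
  0 < mu -> 0 <= sigma ->
  exists rho : R,
    [/\ rhoD_eq (sigma / mu) rho,
        (forall rho' : R, rhoD_eq (sigma / mu) rho' -> rho' = rho),
        DAPX mu sigma = rho%:E &
        robust_ratio mu sigma (rho / (2 * rho - 1) * mu) = rho%:E].
Proof.
move=> mu0 s0.
have [x x1 ex] := rho_exists (sigma / mu).
have hx : rhoD_eq (sigma / mu) x by apply/rhoD_iff.
have pge0 : 0 <= x / (2 * x - 1) * mu.
  apply: mulr_ge0; last lra.
  apply: divr_ge0; lra.
exists x; split => //.
- by move=> r' hr'; exact: rho_unique hr' hx.
- apply/le_anti/andP; split.
    apply: le_trans (upper mu0 s0 hx).
    apply: ereal_inf_lbound.
    by exists (x / (2 * x - 1) * mu).
  apply: le_ereal_inf_tmp => _ [p p0 <-].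
  exact: lower.
- apply/le_anti/andP; split; first exact: upper.
  exact: lower.
Qed.
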